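(* Let $f$ be a four times continuously differentiable convex function on $[0,\infty)$ with $f(1)=1$, and let $g(x)=x^2f''(x)$. Suppose $g\ge 0$ on $[0,\infty)$ and $x^2g''(x)-g(\alpha)\,g(x/\alpha)\le 0$ for all $x\ge0$ and all $\alpha>0$. Then for all finite sets $\mathcal{Y},\mathcal{Z}$ and all distributions $q_Y\ll r_Y$ on $\mathcal{Y}$, $q_Z\ll r_Z$ on $\mathcal{Z}$, $$D_f(q_Yq_Z\|r_Yr_Z)\le D_f(q_Y\|r_Y)\,D_f(q_Z\|r_Z).$$ Equivalently, with $\hat f=f-1$, $\log(1+D_{\hat f}(q_Yq_Z\|r_Yr_Z))\le \log(1+D_{\hat f}(q_Y\|r_Y))+\log(1+D_{\hat f}(q_Z\|r_Z))$.
   Context: For distributions $p\ll q$ on a finite set and any function $f$ on $[0,\infty)$, $D_f(p\|q)=\sum_x q(x) f(p(x)/q(x))$ with the convention $0f(0/0)=0$. *)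

(* Defs.v *)
From HB Require Import structures.
From mathcomp Require Import all_boot all_order all_algebra.
From mathcomp Require Import all_classical all_reals all_analysis.
Set Implicit Arguments. Unset Strict Implicit. Unset Printing Implicit Defensive.
Import Order.TTheory GRing.Theory Num.Theory.
Import numFieldNormedType.Exports.
Local Open Scope classical_set_scope.
Local Open Scope ring_scope.

Section Defs.
Variable R : realType.

(* F' is the derivative of F on [0, +oo): two-sided in the interior,
   right derivative at 0 (difference quotients taken within [0, +oo)). *)
Definition deriv_on_nonneg (F F' : R -> R) : Prop :=
  forall x : R, 0 <= x ->
    (fun h : R => (F (x + h) - F x) / h)
      @ within [set h : R | h != 0 /\ 0 <= x + h] (nbhs (0:R)) --> F' x.

Definition C4_nonneg (f : R -> R) : Prop :=
  exists f1 f2 f3 f4 : R -> R,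
    [/\ deriv_on_nonneg f f1, deriv_on_nonneg f1 f2, deriv_on_nonneg f2 f3,
        deriv_on_nonneg f3 f4 & {within [set x : R | 0 <= x], continuous f4}].

Definition convex_nonneg (f : R -> R) : Prop :=
  forall x y t : R, 0 <= x -> 0 <= y -> 0 <= t <= 1 ->
    f ((1 - t) * x + t * y) <= (1 - t) * f x + t * f y.

Definition is_distr (T : finType) (p : T -> R) : Prop :=
  (forall x, 0 <= p x) /\ \sum_(x : T) p x = 1.

Definition abs_cont (T : finType) (p q : T -> R) : Prop :=
  forall x, q x = 0 -> p x = 0.

(* D_f(p || q) = sum_x q(x) f(p(x)/q(x)), with 0 f(0/0) = 0. *)
Definition fdiv (f : R -> R) (T : finType) (p q : T -> R) : R :=
  \sum_(x : T | q x != 0) q x * f (p x / q x).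

Definition prod_distr (Y Z : finType) (p : Y -> R) (q : Z -> R) : (Y * Z)%type -> R :=
  fun yz => p yz.1 * q yz.2.

End Defs.

(* Main.v *)
Require Import Defs.
From HB Require Import structures.
From mathcomp Require Import all_boot all_order all_algebra.
From mathcomp Require Import all_classical all_reals all_analysis.
From mathcomp Require Import ring lra.
Import Order.TTheory GRing.Theory Num.Theory.
Import numFieldNormedType.Exports.
Local Open Scope classical_set_scope.
Local Open Scope ring_scope.

Section S.
Variable R : realType.
Implicit Types F G : R -> R.

Lemma deriv_pos F (F1 : R -> R) (x : R) : deriv_on_nonneg F F1 -> 0 < x -> is_derive x 1 F (F1 x).
Proof.
move=> dF x0.
have H : (fun h : R => (F (x + h) - F x) / h) @ 0^' --> F1 x.
  apply: cvg_trans (dF x (ltW x0)).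
  apply: cvg_app => P /=.
  rewrite /within /= !near_simpl.
  move=> HP.
  have hx : \forall h \near (0:R), 0 <= x + h.
    have := @lt_nbhsr R (-x) 0.
    rewrite oppr_lt0 => /(_ x0); apply: filter_app; near=> h => hh.
    by rewrite -lerBlDl sub0r ltW.
  move: HP; apply: filter_app2 hx; near=> h => hx HP hn0.
  exact: HP.
have E : (fun h : R => h^-1 *: ((F \o shift x) (h *: 1) - F x)) =
         (fun h : R => (F (x + h) - F x) / h).
  rewrite funeqE => h /=. change (h^-1 * (F (h * 1 + x) - F x) = (F (x + h) - F x) / h). by rewrite mulrC mulr1 (addrC h x).
apply: DeriveDef.
  by rewrite /derivable E; apply/cvg_ex; exists (F1 x).
by rewrite /derive E; exact: cvg_lim.
Unshelve. all: by end_near. Qed.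

Lemma rc_of F (F1 : R -> R) : deriv_on_nonneg F F1 -> F @ 0^'+ --> F 0.
Proof.
move=> dF.
set Q := fun h : R => (F (0 + h) - F 0) / h.
have HQ : Q @ 0^'+ --> F1 0.
  apply: cvg_trans (dF 0 (lexx 0)).
  apply: cvg_app => P /=.
  move=> HP; have {}HP : \forall h \near (0:R), (h != 0 /\ 0 <= 0 + h) -> P h := HP.
  change (\forall h \near (0:R), 0 < h -> P h).
  apply: filter_app HP; near=> h => HP h0; apply: HP; split.
    by rewrite gt_eqF.
  by rewrite add0r ltW.
have Hh : (fun h : R => h) @ 0^'+ --> (0:R) by apply: cvg_at_right_filter; exact: cvg_id.
have FF : Filter ((0:R)^'+) by apply: filter_filter. have HM := @cvgM _ _ _ FF _ _ _ _ Hh HQ. have HC := @cvg_cst _ (F 0) _ ((0:R)^'+) FF. have H2 := @cvgD _ _ _ _ FF _ _ _ _ HC HM.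
rewrite mul0r addr0 in H2.
have E : {near (0:R)^'+, ((fun=> F 0) + id \* Q) =1 F}.
  near=> h.
  have h0 : 0 < h by near: h; exact: nbhs_right_gt.
  change (F 0 + h * ((F (0 + h) - F 0) / h) = F h).
  by rewrite add0r mulrC divfK ?gt_eqF // addrC subrK.
exact: (cvg_trans (near_eq_cvg E) H2).
Unshelve. all: by end_near. Qed.

Lemma rc_comp F (c : R) : 0 <= c -> F @ 0^'+ --> F 0 ->
  (fun s => F (c * s)) @ 0^'+ --> F (c * 0).
Proof.
rewrite le_eqVlt => /orP[/eqP<-|c0] HF.
  have -> : (fun s => F (0 * s)) = fun _ => F 0 by rewrite funeqE => s; rewrite mul0r.
  rewrite mul0r; exact: cvg_cst.
have := @increasing_cvg_at_right_comp R (fun s => c * s) F 0 (BInfty _ false) (F 0).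
rewrite mulr0; apply => //.
- by move=> x y _ _ xy; rewrite ltr_pM2l.
- apply: cvg_at_right_filter; rewrite -[X in _ --> X](mulr0 c).
  apply: cvgMr; exact: cvg_id.
Qed.

Lemma comp_deriv F (F1 : R -> R) (c t : R) : 0 <= c -> 0 < t ->
  (forall x : R, 0 < x -> is_derive x 1 F (F1 x)) ->
  is_derive t 1 (fun s => F (c * s)) (c * F1 (c * t)).
Proof.
rewrite le_eqVlt => /orP[/eqP<-|c0] t0 dF.
  have -> : (fun s => F (0 * s)) = cst (F 0) by rewrite funeqE => s; rewrite mul0r.
  rewrite mul0r; exact: is_derive_cst.
have ct : 0 < c * t by rewrite mulr_gt0.
have dm : derivable (fun s : R => c * s) t 1.
  by apply/derivable1_diffP; exact: differentiableM.
have dFc := dF _ ct.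
have dF' : derivable F (c * t) 1 by case: dFc.
have E := derive1_comp dm dF'.
apply: DeriveDef.
  apply/derivable1_diffP.
  apply: (differentiable_comp (f := fun s => c * s)).
    by apply/derivable1_diffP.
  by apply/derivable1_diffP.
rewrite -derive1E.
have -> : (fun s => F (c * s)) = F \o (fun s => c * s) by [].
rewrite E derive1E (@derive_val _ _ _ _ _ _ _ dFc).
rewrite derive1E.
have : is_derive t 1 (fun s : R => c * s) c.
  have h1 := is_deriveZ c (is_derive_id t (1:R)).
  apply: (is_derive_eq h1).
  by change (c * 1 = c); rewrite mulr1.
by move=> [_ ->]; rewrite mulrC.
Qed.

Lemma cont_pos (h h1 : R -> R) (x : R) : is_derive x 1 h (h1 x) -> h @ x --> h x.
Proof.
move=> [d _]; apply: differentiable_continuous; exact/derivable1_diffP.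
Qed.

Lemma cont_seg {h h1 : R -> R} {u v : R} :
  (forall x : R, 0 < x -> is_derive x 1 h (h1 x)) ->
  h @ 0^'+ --> h 0 -> 0 <= u -> u < v -> {within `[u, v], continuous h}.
Proof.
move=> dh rc; rewrite le_eqVlt => /orP[/eqP<-|u0] uv.
  apply/continuous_within_itvP => //; split => //.
    move=> x; rewrite in_itv /= => /andP[x0 _].
    apply: differentiable_continuous; apply/derivable1_diffP; by case: (dh x x0).
  apply: cvg_at_left_filter; apply: differentiable_continuous; apply/derivable1_diffP; by case: (dh v uv).
apply: derivable_within_continuous => x; rewrite in_itv /= => /andP[ux _].
by case: (dh x (lt_le_trans u0 ux)).
Qed.

Lemma pos_oo {u v x : R} : 0 <= u -> x \in `]u, v[ -> 0 < x.
Proof. by move=> u0; rewrite in_itv /= => /andP[ux _]; exact: le_lt_trans ux. Qed.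

Lemma pos_cc {u v x : R} : 0 < u -> x \in `[u, v] -> 0 < x.
Proof. by move=> u0; rewrite in_itv /= => /andP[ux _]; exact: lt_le_trans ux. Qed.

Lemma mono_h1 {h1 h2 : R -> R} {u v : R} :
  (forall x : R, 0 < x -> is_derive x 1 h1 (h2 x)) ->
  (forall x : R, 0 < x -> 0 <= h2 x) -> 0 < u -> u <= v -> h1 u <= h1 v.
Proof.
move=> dh h2p u0; rewrite le_eqVlt => /orP[/eqP->//|uv].
have cont : {within `[u, v], continuous h1}.
  apply: derivable_within_continuous => x xI.
  by case: (dh x (pos_cc u0 xI)).
have [c cI E] := MVT uv (fun x xI => dh x (pos_oo (ltW u0) xI)) cont.
rewrite -subr_ge0 E mulr_ge0 //; first exact: h2p (pos_oo (ltW u0) cI).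
by rewrite subr_ge0 ltW.
Qed.

Lemma tangent {h h1 h2 : R -> R} :
  (forall x : R, 0 < x -> is_derive x 1 h (h1 x)) ->
  (forall x : R, 0 < x -> is_derive x 1 h1 (h2 x)) ->
  (forall x : R, 0 < x -> 0 <= h2 x) ->
  h @ 0^'+ --> h 0 ->
  forall a : R, 0 <= a -> h 1 + h1 1 * (a - 1) <= h a.
Proof.
move=> dh dh1 h2p rc a a0.
case: (ltgtP a 1) => [a1|a1|->]; last by rewrite subrr mulr0 addr0.
  have [c cI E] := MVT a1 (fun x xI => dh x (pos_oo a0 xI)) (cont_seg dh rc a0 a1).
  have c0 : 0 < c := pos_oo a0 cI.
  have hc : h1 c <= h1 1.
    apply: (mono_h1 dh1 h2p c0); move: cI; rewrite in_itv /= => /andP[_ /ltW]//.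
  have : h1 c * (1 - a) <= h1 1 * (1 - a) by rewrite ler_wpM2r // subr_ge0 ltW.
  rewrite -E => H.
  have -> : h1 1 * (a - 1) = - (h1 1 * (1 - a)) by rewrite -mulrN opprB.
  lra.
have a0' : 0 < 1 :> R by [].
have [c cI E] := MVT a1 (fun x xI => dh x (pos_oo (@ler01 R) xI)) (cont_seg dh rc (@ler01 R) a1).
have c0 : 0 < c := pos_oo (@ler01 R) cI.
have hc : h1 1 <= h1 c.
  apply: (mono_h1 dh1 h2p ltr01); move: cI; rewrite in_itv /= => /andP[/ltW]//.
have : h1 1 * (a - 1) <= h1 c * (a - 1) by rewrite ler_wpM2r // subr_ge0 ltW.
rewrite -E => H; lra.
Qed.

Lemma deriv_ext (F G : R -> R) (x d : R) : (forall y, F y = G y) ->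
  is_derive x 1 F d -> is_derive x 1 G d.
Proof. by move=> /funext ->. Qed.

Lemma deriv_pos_ext (F G : R -> R) (x d : R) : 0 < x ->
  (forall y, 0 < y -> F y = G y) -> is_derive x 1 F d -> is_derive x 1 G d.
Proof.
move=> x0 E; apply: near_eq_is_derive.
near=> y; apply: E; near: y; exact: lt_nbhsr.
Unshelve. all: by end_near. Qed.

Lemma derive1_of {F : R -> R} {x d : R} : is_derive x 1 F d -> derive1 F x = d.
Proof. by move=> [_ <-]; rewrite derive1E. Qed.

Lemma deriv_mul (A A1 B B1 : R -> R) (x : R) : is_derive x 1 A (A1 x) ->
  is_derive x 1 B (B1 x) ->
  is_derive x 1 (fun y => A y * B y) (A1 x * B x + A x * B1 x).
Proof.
move=> hA hB; apply: is_derive_eq (is_deriveM hA hB) _.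
by change (A x * B1 x + B x * A1 x = A1 x * B x + A x * B1 x); ring.
Qed.

Lemma deriv_add (A A1 B B1 : R -> R) (x : R) : is_derive x 1 A (A1 x) ->
  is_derive x 1 B (B1 x) ->
  is_derive x 1 (fun y => A y + B y) (A1 x + B1 x).
Proof. move=> hA hB; exact: (is_deriveD hA hB). Qed.

Lemma deriv_sub (A A1 B B1 : R -> R) (x : R) : is_derive x 1 A (A1 x) ->
  is_derive x 1 B (B1 x) ->
  is_derive x 1 (fun y => A y - B y) (A1 x - B1 x).
Proof. move=> hA hB; exact: (is_deriveB hA hB). Qed.

Lemma deriv_cmul (c : R) (A A1 : R -> R) (x : R) : is_derive x 1 A (A1 x) ->
  is_derive x 1 (fun y => c * A y) (c * A1 x).
Proof. move=> hA; exact: (is_deriveZ c hA). Qed.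

Lemma deriv_id (x : R) : is_derive x 1 (fun y : R => y) 1.
Proof. exact: is_derive_id. Qed.

Lemma deriv_sq (x : R) : is_derive x 1 (fun y : R => y ^+ 2) (2 * x).
Proof.
apply: (@deriv_ext (fun y => y * y)); first by move=> y; rewrite expr2.
apply: is_derive_eq (@deriv_mul (fun y => y) (fun=> 1) (fun y => y) (fun=> 1) x (deriv_id x) (deriv_id x)) _.
ring.
Qed.

Lemma sum_deriv (I : Type) (s : seq I) (P : pred I) (Fs Fs1 : I -> R -> R) (t : R) :
  (forall i, P i -> is_derive t 1 (Fs i) (Fs1 i t)) ->
  is_derive t 1 (fun x => \sum_(i <- s | P i) Fs i x) (\sum_(i <- s | P i) Fs1 i t).
Proof.
move=> H; elim: s => [|i s IH].
  apply: (@deriv_ext (cst 0)); first by move=> y; rewrite big_nil.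
  rewrite big_nil; exact: is_derive_cst.
case Pi: (P i).
  apply: (@deriv_ext (fun x => Fs i x + \sum_(j <- s | P j) Fs j x)).
    by move=> y; rewrite big_cons Pi.
  rewrite big_cons Pi.
  exact: (@deriv_add (Fs i) (Fs1 i) (fun x => \sum_(j <- s | P j) Fs j x) (fun t => \sum_(j <- s | P j) Fs1 j t) t (H i Pi) IH).
apply: (@deriv_ext (fun x => \sum_(j <- s | P j) Fs j x)).
  by move=> y; rewrite big_cons Pi.
by rewrite big_cons Pi.
Qed.

Lemma sum_rc (I : Type) (s : seq I) (P : pred I) (Fs : I -> R -> R) :
  (forall i, P i -> Fs i @ 0^'+ --> Fs i 0) ->
  (fun x => \sum_(i <- s | P i) Fs i x) @ 0^'+ --> \sum_(i <- s | P i) Fs i 0.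
Proof.
have FF : Filter ((0:R)^'+) by apply: filter_filter.
move=> H; elim: s => [|i s IH].
  have -> : (fun x => \sum_(i <- [::] | P i) Fs i x) = cst 0 by rewrite funeqE => y; rewrite big_nil.
  rewrite big_nil; exact: (@cvg_cst _ _ _ _ FF).
case Pi: (P i).
  have -> : (fun x => \sum_(j <- i :: s | P j) Fs j x) = (fun x => Fs i x + \sum_(j <- s | P j) Fs j x).
    by rewrite funeqE => y; rewrite big_cons Pi.
  rewrite big_cons Pi; exact: (@cvgD _ _ _ _ FF _ _ _ _ (H i Pi) IH).
have -> : (fun x => \sum_(j <- i :: s | P j) Fs j x) = (fun x => \sum_(j <- s | P j) Fs j x).
  by rewrite funeqE => y; rewrite big_cons Pi.
by rewrite big_cons Pi.
Qed.

Lemma sum_r1 {T : finType} {r : T -> R} :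
  is_distr r -> \sum_(x | r x != 0) r x = 1.
Proof.
move=> [_ dr]; rewrite -dr [RHS](bigID (fun x => r x != 0)) /=.
by rewrite [X in _ = _ + X]big1 ?addr0 // => x /negPn/eqP.
Qed.

Lemma sum_q1 {T : finType} {q r : T -> R} :
  is_distr q -> abs_cont q r -> \sum_(x | r x != 0) r x * (q x / r x) = 1.
Proof.
move=> [_ dq] ac; rewrite -dq [RHS](bigID (fun x => r x != 0)) /=.
rewrite [X in _ = _ + X]big1 ?addr0; last by move=> x /negPn/eqP /ac.
by apply: eq_bigr => x rx; rewrite mulrC divfK.
Qed.

Lemma sum_tangent {T : finType} {q r : T -> R} {H : R -> R} {c : R} :
  is_distr q -> is_distr r -> abs_cont q r ->
  (forall a, 0 <= a -> H 1 + c * (a - 1) <= H a) ->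
  H 1 <= \sum_(x | r x != 0) r x * H (q x / r x).
Proof.
move=> dq dr ac HT.
have S1 := sum_r1 dr; have S2 := sum_q1 dq ac.
apply: (@le_trans _ _ (\sum_(x | r x != 0) r x * (H 1 + c * (q x / r x - 1)))).
  have -> : \sum_(x | r x != 0) r x * (H 1 + c * (q x / r x - 1)) =
    H 1 * \sum_(x | r x != 0) r x + c * \sum_(x | r x != 0) r x * (q x / r x)
    - c * \sum_(x | r x != 0) r x.
    rewrite !mulr_sumr -big_split -sumrB /=; apply: eq_bigr => x _; ring.
  by rewrite S1 S2; lra.
apply: ler_sum => x rx; apply: ler_wpM2l; first by case: dr.
apply: HT; apply: divr_ge0; [by case: dq | by case: dr].
Qed.

Lemma prod_fdiv (f : R -> R) (Y Z : finType) (qY rY : Y -> R) (qZ rZ : Z -> R) :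
  fdiv f (prod_distr qY qZ) (prod_distr rY rZ) =
  \sum_(z | rZ z != 0) rZ z * \sum_(y | rY y != 0) rY y * f (qY y / rY y * (qZ z / rZ z)).
Proof.
rewrite /fdiv /prod_distr.
rewrite (eq_bigl (fun p : Y * Z => (rY p.1 != 0) && (rZ p.2 != 0))); last first.
  by move=> [y z] /=; rewrite mulf_eq0 negb_or.
rewrite -(pair_big_dep (fun y => rY y != 0) (fun _ z => rZ z != 0)
  (fun y z => rY y * rZ z * f (qY y * qZ z / (rY y * rZ z)))) /=.
rewrite exchange_big /=; apply: eq_bigr => z _; rewrite mulr_sumr.
by apply: eq_bigr => y _; rewrite mulf_div mulrCA mulrA.
Qed.

Lemma rc_sq : (fun y : R => y ^+ 2) @ 0^'+ --> (0:R) ^+ 2.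
Proof. apply: cvg_at_right_filter; exact: exprn_continuous. Qed.

Lemma main (f : R -> R) :
  C4_nonneg f -> convex_nonneg f -> f 1 = 1 ->
  let g := fun x : R => x ^+ 2 * derive1n 2 f x in
  (forall x : R, 0 <= x -> 0 <= g x) ->
  (forall x alpha : R, 0 <= x -> 0 < alpha ->
     x ^+ 2 * derive1n 2 g x - g alpha * g (x / alpha) <= 0) ->
  forall (Y Z : finType) (qY rY : Y -> R) (qZ rZ : Z -> R),
    is_distr qY -> is_distr rY -> abs_cont qY rY ->
    is_distr qZ -> is_distr rZ -> abs_cont qZ rZ ->
    fdiv f (prod_distr qY qZ) (prod_distr rY rZ)
      <= fdiv f qY rY * fdiv f qZ rZ.
Proof.
move=> [f1 [f2 [f3 [f4 [d1 d2 d3 d4 _]]]]] _ f11 g _ ghyp Y Z qY rY qZ rZ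
  dqY drY acY dqZ drZ acZ.
have FF : Filter ((0:R)^'+) by apply: filter_filter.
have Df : forall x : R, 0 < x -> is_derive x 1 f (f1 x) := fun x x0 => @deriv_pos f f1 x d1 x0.
have Df1 : forall x : R, 0 < x -> is_derive x 1 f1 (f2 x) := fun x x0 => @deriv_pos f1 f2 x d2 x0.
have Df2 : forall x : R, 0 < x -> is_derive x 1 f2 (f3 x) := fun x x0 => @deriv_pos f2 f3 x d3 x0.
have Df3 : forall x : R, 0 < x -> is_derive x 1 f3 (f4 x) := fun x x0 => @deriv_pos f3 f4 x d4 x0.
have rcf := @rc_of f f1 d1.
have rcf2 := @rc_of f2 f3 d3.
pose G := fun y : R => y ^+ 2 * f2 y.
pose G1 := fun y : R => 2 * y * f2 y + y ^+ 2 * f3 y.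
pose G2 := fun y : R => 2 * f2 y + 2 * y * f3 y + (2 * y * f3 y + y ^+ 2 * f4 y).
have DG : forall x : R, 0 < x -> is_derive x 1 G (G1 x) :=
  fun x x0 => @deriv_mul (fun y => y ^+ 2) (fun y => 2 * y) f2 f3 x (deriv_sq x) (Df2 x x0).
have DG1 : forall x : R, 0 < x -> is_derive x 1 G1 (G2 x).
  move=> x x0.
  apply: (@deriv_add (fun y => 2 * y * f2 y) (fun y => 2 * f2 y + 2 * y * f3 y)
     (fun y => y ^+ 2 * f3 y) (fun y => 2 * y * f3 y + y ^+ 2 * f4 y)).
    have h2 : is_derive x 1 (fun y : R => 2 * y) ((fun=> 2) x).
      apply: is_derive_eq (@deriv_cmul 2 (fun y => y) (fun=> 1) x (deriv_id x)) _.
      by rewrite mulr1.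
    exact: (@deriv_mul (fun y => 2 * y) (fun=> 2) f2 f3 x h2 (Df2 x x0)).
  exact: (@deriv_mul (fun y => y ^+ 2) (fun y => 2 * y) f3 f4 x (deriv_sq x) (Df3 x x0)).
have D2f : forall x : R, 0 < x -> derive1n 2 f x = f2 x.
  move=> x x0; rewrite derive1nS derive1n1; apply: derive1_of.
  apply: (@deriv_pos_ext f1 (derive1 f) x (f2 x) x0 _ (Df1 x x0)).
  by move=> y y0; rewrite (derive1_of (Df y y0)).
have gG : forall y : R, 0 <= y -> g y = G y.
  move=> y; rewrite le_eqVlt => /orP[/eqP<-|y0].
    by rewrite /g /G expr2 !mul0r.
  by rewrite /g /G D2f.
have D2g : forall x : R, 0 < x -> derive1n 2 g x = G2 x.
  move=> x x0; rewrite derive1nS derive1n1; apply: derive1_of.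
  apply: (@deriv_pos_ext G1 (derive1 g) x (G2 x) x0 _ (DG1 x x0)).
  move=> y y0; apply/esym/derive1_of.
  apply: (@deriv_pos_ext G g y (G1 y) y0 _ (DG y y0)).
  by move=> z z0; rewrite gG // ltW.
have rcG : G @ 0^'+ --> G 0.
  have := @cvgM _ _ _ FF _ _ _ _ rc_sq rcf2.
  by rewrite /G.
pose D1 := fdiv f qY rY.
pose a := fun y : Y => qY y / rY y.
have a0 : forall y, 0 <= a y.
  by move=> y; apply: divr_ge0; [case: dqY | case: drY].
have L1 : forall t : R, 0 <= t ->
    \sum_(y | rY y != 0) rY y * G (t * a y) <= G t * D1.
  move=> t; rewrite le_eqVlt => /orP[/eqP<-|t0].
    rewrite (_ : G 0 = 0); last by rewrite /G expr2 !mul0r.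
    rewrite mul0r big1 // => y _.
    by rewrite /G mul0r expr2 !mul0r mulr0.
  pose chi := fun s : R => G t * f s - G (t * s).
  pose chi1 := fun s : R => G t * f1 s - t * G1 (t * s).
  pose chi2 := fun s : R => G t * f2 s - t * (t * G2 (t * s)).
  have Dchi : forall s : R, 0 < s -> is_derive s 1 chi (chi1 s).
    move=> s s0.
    exact: (@deriv_sub (fun s => G t * f s) (fun s => G t * f1 s) (fun s => G (t * s))
      (fun s => t * G1 (t * s)) s (@deriv_cmul (G t) f f1 s (Df s s0))
      (@comp_deriv G G1 t s (ltW t0) s0 DG)).
  have Dchi1 : forall s : R, 0 < s -> is_derive s 1 chi1 (chi2 s).
    move=> s s0.
    exact: (@deriv_sub (fun s => G t * f1 s) (fun s => G t * f2 s) (fun s => t * G1 (t * s))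
      (fun s => t * (t * G2 (t * s))) s (@deriv_cmul (G t) f1 f2 s (Df1 s s0))
      (@deriv_cmul t (fun s => G1 (t * s)) (fun s => t * G2 (t * s)) s
        (@comp_deriv G1 G2 t s (ltW t0) s0 DG1))).
  have chi2p : forall s : R, 0 < s -> 0 <= chi2 s.
    move=> s s0.
    have ts0 : 0 < t * s by rewrite mulr_gt0.
    have H := ghyp (t * s) s (ltW ts0) s0.
    rewrite D2g // mulfK ?gt_eqF // (gG s (ltW s0)) (gG t (ltW t0)) in H.
    rewrite -(pmulr_rge0 _ (exprn_gt0 2 s0)).
    have -> : s ^+ 2 * chi2 s = G s * G t - (t * s) ^+ 2 * G2 (t * s).
      by rewrite /chi2 /G; ring.
    lra.
  have rcchi : chi @ 0^'+ --> chi 0.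
    have h1 := @cvgM _ _ _ FF (fun=> G t) f _ _ (@cvg_cst _ (G t) _ _ FF) rcf.
    have h2 := @rc_comp G t (ltW t0) rcG.
    exact: (@cvgB _ _ _ _ FF _ _ _ _ h1 h2).
  have HT := tangent Dchi Dchi1 chi2p rcchi.
  have := sum_tangent dqY drY acY HT.
  rewrite /chi f11 mulr1 mulr1 subrr.
  have -> : \sum_(x | rY x != 0) rY x * (G t * f (qY x / rY x) - G (t * (qY x / rY x))) =
     G t * D1 - \sum_(y | rY y != 0) rY y * G (t * a y).
    rewrite /D1 /fdiv mulr_sumr -sumrB; apply: eq_bigr => y _; rewrite /a; ring.
  by rewrite subr_ge0.
pose psi := fun t : R => D1 * f t - \sum_(y | rY y != 0) rY y * f (a y * t).
pose psi1 := fun t : R => D1 * f1 t - \sum_(y | rY y != 0) rY y * (a y * f1 (a y * t)).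
pose psi2 := fun t : R => D1 * f2 t - \sum_(y | rY y != 0) rY y * (a y * (a y * f2 (a y * t))).
have Dpsi : forall t : R, 0 < t -> is_derive t 1 psi (psi1 t).
  move=> t t0.
  apply: (@deriv_sub (fun t => D1 * f t) (fun t => D1 * f1 t)
    (fun t => \sum_(y | rY y != 0) rY y * f (a y * t))
    (fun t => \sum_(y | rY y != 0) rY y * (a y * f1 (a y * t))) t
    (@deriv_cmul D1 f f1 t (Df t t0))).
  apply: (@sum_deriv Y (index_enum Y) (fun y => rY y != 0)
     (fun y t => rY y * f (a y * t)) (fun y t => rY y * (a y * f1 (a y * t))) t).
  move=> y _.
  exact: (@deriv_cmul (rY y) (fun t => f (a y * t)) (fun t => a y * f1 (a y * t)) t
     (@comp_deriv f f1 (a y) t (a0 y) t0 Df)).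
have Dpsi1 : forall t : R, 0 < t -> is_derive t 1 psi1 (psi2 t).
  move=> t t0.
  apply: (@deriv_sub (fun t => D1 * f1 t) (fun t => D1 * f2 t)
    (fun t => \sum_(y | rY y != 0) rY y * (a y * f1 (a y * t)))
    (fun t => \sum_(y | rY y != 0) rY y * (a y * (a y * f2 (a y * t)))) t
    (@deriv_cmul D1 f1 f2 t (Df1 t t0))).
  apply: (@sum_deriv Y (index_enum Y) (fun y => rY y != 0)
     (fun y t => rY y * (a y * f1 (a y * t))) (fun y t => rY y * (a y * (a y * f2 (a y * t)))) t).
  move=> y _.
  exact: (@deriv_cmul (rY y) (fun t => a y * f1 (a y * t)) (fun t => a y * (a y * f2 (a y * t))) t
    (@deriv_cmul (a y) (fun t => f1 (a y * t)) (fun t => a y * f2 (a y * t)) t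
     (@comp_deriv f1 f2 (a y) t (a0 y) t0 Df1))).
have psi2p : forall t : R, 0 < t -> 0 <= psi2 t.
  move=> t t0.
  rewrite -(pmulr_rge0 _ (exprn_gt0 2 t0)).
  have -> : t ^+ 2 * psi2 t = G t * D1 - \sum_(y | rY y != 0) rY y * G (t * a y).
    rewrite /psi2 mulrBr mulr_sumr; congr (_ - _); first by rewrite /G; ring.
    by apply: eq_bigr => y _; rewrite /G (mulrC t (a y)); ring.
  by rewrite subr_ge0; exact: L1 (ltW t0).
have rcpsi : psi @ 0^'+ --> psi 0.
  have h1 := @cvgM _ _ _ FF (fun=> D1) f _ _ (@cvg_cst _ D1 _ _ FF) rcf.
  have h2 := @sum_rc Y (index_enum Y) (fun y => rY y != 0)
    (fun y t => rY y * f (a y * t))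
    (fun y _ => @cvgM _ _ _ FF (fun=> rY y) (fun t => f (a y * t)) _ _
       (@cvg_cst _ (rY y) _ _ FF) (@rc_comp f (a y) (a0 y) rcf)).
  exact: (@cvgB _ _ _ _ FF _ _ _ _ h1 h2).
have HT := tangent Dpsi Dpsi1 psi2p rcpsi.
have := sum_tangent dqZ drZ acZ HT.
rewrite /psi f11 mulr1.
rewrite (eq_bigr (fun y => rY y * f (qY y / rY y))); last by move=> y _; rewrite /a mulr1.
rewrite -/(fdiv f qY rY) -/D1 subrr prod_fdiv.
have -> : \sum_(x | rZ x != 0) rZ x * (D1 * f (qZ x / rZ x) -
        \sum_(y | rY y != 0) rY y * f (a y * (qZ x / rZ x))) =
   D1 * fdiv f qZ rZ - \sum_(z | rZ z != 0) rZ z *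
        \sum_(y | rY y != 0) rY y * f (qY y / rY y * (qZ z / rZ z)).
  rewrite /fdiv mulr_sumr -sumrB; apply: eq_bigr => z _.
  by rewrite mulrBr; congr (_ - _); ring.
by rewrite subr_ge0.
Qed.
End S.

Theorem theorem3 (R : realType) (f : R -> R) :
  C4_nonneg f -> convex_nonneg f -> f 1 = 1 ->
  let g := fun x : R => x ^+ 2 * derive1n 2 f x in
  (forall x : R, 0 <= x -> 0 <= g x) ->
  (forall x alpha : R, 0 <= x -> 0 < alpha ->
     x ^+ 2 * derive1n 2 g x - g alpha * g (x / alpha) <= 0) ->
  forall (Y Z : finType) (qY rY : Y -> R) (qZ rZ : Z -> R),
    is_distr qY -> is_distr rY -> abs_cont qY rY ->
    is_distr qZ -> is_distr rZ -> abs_cont qZ rZ ->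
    fdiv f (prod_distr qY qZ) (prod_distr rY rZ)
      <= fdiv f qY rY * fdiv f qZ rZ.
Proof. exact: (@main R f). Qed.
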